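(* Let $p$ be a prime, $m\ge 1$, $t\ge 1$ integers, $R^t=\mathbb{F}_{p^m}[u]/\langle u^t\rangle$, let $\omega(x)\in R^t[x]$ and $R^{t,\omega}=R^t[x]/\langle\omega(x)\rangle$. Then for every ideal $I$ of $R^{t,\omega}$ there exists $a\in I$ such that $$I=\langle a\rangle+u(I:u).$$
   Context: For an ideal $I$ of a commutative ring $R$ and $a\in R$, $(I:a)=\{x\in R: xa\in I\}$. *)

(* Defs.v *)
From mathcomp Require Import all_boot all_order all_algebra.
Set Implicit Arguments. Unset Strict Implicit. Unset Printing Implicit Defensive.
Import GRing.Theory.
Local Open Scope ring_scope.

Definition is_ideal (S : comPzRingType) (I : S -> Prop) : Prop :=
  [/\ I 0,
      (forall x y, I x -> I y -> I (x + y)) &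
      (forall r x, I x -> I (r * x))].

Definition colon (S : comPzRingType) (I : S -> Prop) (a : S) : S -> Prop :=
  fun x => I (x * a).

(* Main.v *)
Require Import Defs.
From mathcomp Require Import all_boot all_order all_algebra.
From Stdlib Require Import Classical.
From mathcomp Require Import ring.
Import GRing.Theory.
Local Open Scope ring_scope.

Lemma take1_const (F : nzRingType) (q : {poly F}) : take_poly 1 q = (q`_0)%:P.
Proof.
apply/polyP => i; rewrite coef_take_poly coefC; by case: i.
Qed.

Lemma decomp_coef (F : fieldType) (Rt : comNzRingType)
  (phi : {rmorphism {poly F} -> Rt}) :
  (forall y : Rt, exists q : {poly F}, phi q = y) ->
  forall c : Rt, exists (c0 : F) (c1 : Rt), c = phi c0%:P + phi 'X * c1.
Proof.
move=> surj c; have [q <-] := surj c.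
exists q`_0, (phi (drop_poly 1 q)).
by rewrite -rmorphM -rmorphD -take1_const [_ * drop_poly _ _]mulrC; congr (phi _); rewrite -[LHS](poly_take_drop 1 q).
Qed.

Lemma decomp_poly (F : fieldType) (Rt : comNzRingType)
  (phi : {rmorphism {poly F} -> Rt}) :
  (forall y : Rt, exists q : {poly F}, phi q = y) ->
  forall P : {poly Rt}, exists (f : {poly F}) (P' : {poly Rt}),
    P = map_poly (phi \o polyC) f + (phi 'X)%:P * P'.
Proof.
move=> surj; elim/poly_ind => [|P c [f [P' eP]]].
  by exists 0, 0; rewrite rmorph0 mulr0 addr0.
have [c0 [c1 ec]] := @decomp_coef _ _ phi surj c.
exists (f * 'X + c0%:P), (P' * 'X + c1%:P).
rewrite rmorphD rmorphM /= map_polyX map_polyC /= eP ec.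
rewrite polyCD polyCM; ring.
Qed.

Theorem corollary2p4 (p m t : nat) (F : finFieldType)
  (Rt : comNzRingType) (phi : {rmorphism {poly F} -> Rt})
  (omega : {poly Rt}) (S : comPzRingType) (psi : {rmorphism {poly Rt} -> S}) :
  prime p -> (1 <= m)%N -> (1 <= t)%N -> #|F| = (p ^ m)%N ->
  (forall y : Rt, exists q : {poly F}, phi q = y) ->
  (forall q : {poly F}, phi q = 0 <-> ('X^t %| q)) ->
  (forall z : S, exists P : {poly Rt}, psi P = z) ->
  (forall P : {poly Rt}, psi P = 0 <-> exists Q : {poly Rt}, P = Q * omega) ->
  forall I : S -> Prop, is_ideal I ->
  exists a : S, I a /\
    (forall z : S, I z <->
       exists (r y : S), colon I (psi (phi 'X)%:P) y /\
                         z = r * a + psi (phi 'X)%:P * y).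
Proof.
move=> _ _ _ _ surjphi _ surjpsi _ I [I0 ID IM].
set u := psi (phi 'X)%:P.
set th := fun f : {poly F} => psi (map_poly (phi \o polyC) f).
have thM f g : th (f * g) = th f * th g by rewrite /th !rmorphM.
have thB f g : th (f - g) = th f - th g by rewrite /th !rmorphB.
have dec z : exists f y, z = th f + u * y.
  have [P <-] := surjpsi z; have [f [P' ->]] := @decomp_poly _ _ phi surjphi P.
  by exists f, (psi P'); rewrite rmorphD rmorphM.
have th0 : th 0 = 0 by rewrite /th !rmorph0.
clearbody th u.
pose J f := exists y, I (th f + u * y).
have Jsub f g : J f -> J g -> J (f - (f %/ g) * g).
  move=> [y1 h1] [y2 h2]; exists (y1 - th (f %/ g) * y2).
  have -> : th (f - f %/ g * g) + u * (y1 - th (f %/ g) * y2) =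
    (th f + u * y1) + (- th (f %/ g)) * (th g + u * y2).
    by rewrite thB thM; ring.
  by apply: ID => //; apply: IM.
have [g [Jg gdiv]] : exists g, J g /\ forall f, J f -> g %| f.
  case: (classic (exists g, J g /\ g != 0)) => [[g0 [Jg0 g0n]]|nJ]; last first.
    exists 0; split; first by exists 0; rewrite th0 mulr0 addr0.
    move=> f Jf; rewrite dvd0p; apply/negPn/negP => fn; apply: nJ; by exists f.
  move: {2}(size g0) (leqnn (size g0)) => n; elim: n g0 Jg0 g0n => [|n IH] g0 Jg0 g0n hs.
    by move: g0n; rewrite -size_poly_eq0; move: hs; rewrite leqn0 => ->.
  case: (classic (forall f, J f -> g0 %| f)) => [H|H]; first by exists g0.
  have [f [Jf nd]] : exists f, J f /\ ~~ (g0 %| f).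
    apply: NNPP => H1; apply: H => f Jf; apply/negPn/negP => nd; apply: H1; by exists f.
  apply: (IH (f %% g0)).
  - have -> : f %% g0 = f - f %/ g0 * g0 by rewrite {2}(divp_eq f g0) [_ + f %% g0]addrC addrK.
    exact: Jsub.
  - by rewrite -/(dvdp g0 f).
  - by rewrite -ltnS; apply: leq_trans hs; by rewrite ltn_modp.
have [y0 Ia] := Jg.
exists (th g + u * y0); split => // z; split.
  move=> Iz; have [f [y ez]] := dec z.
  have Jf : J f by exists y; rewrite -ez.
  have /dvdpP [q eq] := gdiv f Jf.
  exists (th q), (y - th q * y0); split; last by rewrite ez eq thM; ring.
  rewrite /colon.
  have -> : (y - th q * y0) * u = z + (- th q) * (th g + u * y0).
    by rewrite ez eq thM; ring.
  by apply: ID => //; apply: IM.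
move=> [r [y [Iy ->]]]; apply: ID; first by apply: IM.
by rewrite mulrC.
Qed.
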